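(* Let $\Phi:\mathbb{R}^N\to\mathbb{R}^M$ and $L:\mathbb{R}^P\to\mathbb{R}^N$ be linear operators, let $\|\cdot\|_A$ be a norm on $\mathbb{R}^P$ with dual norm $\|\cdot\|_A^*$, and set $R(x)=\|L^*x\|_A$. Let $y\in\mathbb{R}^M$, $\lambda>0$, and let $x^\star$ be a minimizer of $\min_{x\in\mathbb{R}^N}\tfrac12\|y-\Phi x\|_2^2+\lambda R(x)$. Assume $\|\cdot\|_A$ is decomposable at $u^\star=L^*x^\star$ with associated subspace $T$ and vector $e\in T$, and let $S=T^\perp$. Assume that there exist $\eta\in\mathbb{R}^M$ and $\alpha\in\partial\|\cdot\|_A(L^*x^\star)$ with $\Phi^*\eta=L\alpha$ and $\|\alpha_S\|_A^*<1$, and that $\Phi$ is injective on $\ker(L_S^* )$. Then $x^\star$ is the unique minimizer of this problem.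
   Context: For a subspace $V\subset\mathbb{R}^P$, $P_V$ denotes the orthogonal projector onto $V$, and $L_V=LP_V$, $L_V^*=P_VL^*$, $\alpha_V=P_V\alpha$ for $\alpha\in\mathbb{R}^P$. A norm $\|\cdot\|_A$ on $\mathbb{R}^P$ is decomposable at $u\in\mathbb{R}^P$ if (i) there exist a subspace $T\subset\mathbb{R}^P$ and a vector $e\in T$ such that $\partial\|\cdot\|_A(u)=\{\alpha\in\mathbb{R}^P:\ \alpha_T=e,\ \|\alpha_{T^\perp}\|_A^*\le 1\}$, and (ii) for every $z\in T^\perp$, $\|z\|_A=\sup\{\langle v,z\rangle: v\in T^\perp,\ \|v\|_A^*\le 1\}$. *)

(* Defs.v *)
(* finite-dimensional real spaces R^n are column vectors 'cV[R]_n
   over an abstract R : realType; linear operators are matrices, adjoints are transposes. *)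
From HB Require Import structures.
From mathcomp Require Import all_boot all_order all_algebra.
From mathcomp Require Import boolp classical_sets reals.
Set Implicit Arguments. Unset Strict Implicit. Unset Printing Implicit Defensive.
Import Order.TTheory GRing.Theory Num.Theory.
Local Open Scope ring_scope.
Local Open Scope classical_set_scope.

Section Defs.
Variable R : realType.

Definition dotv n (u v : 'cV[R]_n) : R := (u^T *m v) 0 0.
Definition sqnorm2 n (u : 'cV[R]_n) : R := dotv u u.

Definition is_norm n (A : 'cV[R]_n -> R) : Prop :=
  [/\ forall x y, A (x + y) <= A x + A y,
      forall (a : R) x, A (a *: x) = `|a| * A x
    & forall x, A x = 0 -> x = 0].

Definition dual_norm n (A : 'cV[R]_n -> R) (v : 'cV[R]_n) : R :=
  sup [set dotv v z | z in [set z | A z <= 1]].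

Definition subdiff n (A : 'cV[R]_n -> R) (u : 'cV[R]_n) : set 'cV[R]_n :=
  [set alpha | forall w, A u + dotv alpha (w - u) <= A w].

Definition is_orth_proj n (T : set 'cV[R]_n) (pT : 'M[R]_n) : Prop :=
  (forall v, T v <-> exists w, v = pT *m w) /\ pT *m pT = pT /\ pT^T = pT.

Definition is_subspace n (T : set 'cV[R]_n) : Prop :=
  T 0 /\ (forall (a : R) u v, T u -> T v -> T (a *: u + v)).

Definition orth_compl n (T : set 'cV[R]_n) : set 'cV[R]_n :=
  [set z | forall v, T v -> dotv v z = 0].

Definition decomposable_at n (A : 'cV[R]_n -> R) (u : 'cV[R]_n)
    (T : set 'cV[R]_n) (pT : 'M[R]_n) (e : 'cV[R]_n) : Prop :=
  let pS := 1%:M - pT in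
  [/\ is_subspace T, is_orth_proj T pT, T e,
      subdiff A u = [set alpha | pT *m alpha = e /\ dual_norm A (pS *m alpha) <= 1]
    & forall z, orth_compl T z ->
        A z = sup [set dotv v z | v in [set v | orth_compl T v /\ dual_norm A v <= 1]]].

Definition objective M N P (Phi : 'M[R]_(M, N)) (L : 'M[R]_(N, P))
    (A : 'cV[R]_P -> R) (y : 'cV[R]_M) (lambda : R) (x : 'cV[R]_N) : R :=
  2^-1 * sqnorm2 (y - Phi *m x) + lambda * A (L^T *m x).

End Defs.

(* Main.v *)
Require Import Defs.
From HB Require Import structures.
From mathcomp Require Import all_boot all_order all_algebra.
From mathcomp Require Import boolp classical_sets reals.
From mathcomp Require Import ring lra.
Import Order.TTheory GRing.Theory Num.Theory.
Local Open Scope ring_scope.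
Local Open Scope classical_set_scope.
Set Implicit Arguments. Unset Strict Implicit.
Section H.
Variable R : realType.
Implicit Types n : nat.

Lemma dotvDl n (u v w : 'cV[R]_n) : dotv (u + v) w = dotv u w + dotv v w.
Proof. by rewrite /dotv linearD mulmxDl mxE. Qed.
Lemma dotvZl n (a : R) (u w : 'cV[R]_n) : dotv (a *: u) w = a * dotv u w.
Proof. by rewrite /dotv linearZ /= -scalemxAl mxE. Qed.
Lemma dotvC n (u v : 'cV[R]_n) : dotv u v = dotv v u.
Proof.
rewrite /dotv -[in LHS](trmxK (u^T *m v)) trmx_mul trmxK mxE.
by [].
Qed.
Lemma dotvDr n (u v w : 'cV[R]_n) : dotv w (u + v) = dotv w u + dotv w v.
Proof. by rewrite dotvC dotvDl !(dotvC w). Qed.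
Lemma dotvZr n (a : R) (u w : 'cV[R]_n) : dotv w (a *: u) = a * dotv w u.
Proof. by rewrite dotvC dotvZl dotvC. Qed.
Lemma dotvNl n (u w : 'cV[R]_n) : dotv (- u) w = - dotv u w.
Proof. by rewrite -scaleN1r dotvZl mulN1r. Qed.
Lemma dotvNr n (u w : 'cV[R]_n) : dotv w (- u) = - dotv w u.
Proof. by rewrite dotvC dotvNl dotvC. Qed.
Lemma dotvBl n (u v w : 'cV[R]_n) : dotv (u - v) w = dotv u w - dotv v w.
Proof. by rewrite dotvDl dotvNl. Qed.
Lemma dotvBr n (u v w : 'cV[R]_n) : dotv w (u - v) = dotv w u - dotv w v.
Proof. by rewrite dotvDr dotvNr. Qed.
Lemma dotv0r n (u : 'cV[R]_n) : dotv u 0 = 0.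
Proof. by rewrite /dotv mulmx0 mxE. Qed.
Lemma dotv0l n (u : 'cV[R]_n) : dotv 0 u = 0.
Proof. by rewrite dotvC dotv0r. Qed.
Lemma dotv_mul m n (B : 'M[R]_(m, n)) (u : 'cV[R]_m) (v : 'cV[R]_n) :
  dotv u (B *m v) = dotv (B^T *m u) v.
Proof. by rewrite /dotv trmx_mul trmxK mulmxA. Qed.

Lemma sqnorm2E n (u : 'cV[R]_n) : sqnorm2 u = \sum_i u i 0 ^+ 2.
Proof. rewrite /sqnorm2 /dotv mxE; apply: eq_bigr => i _; by rewrite mxE expr2. Qed.
Lemma sqnorm2_ge0 n (u : 'cV[R]_n) : 0 <= sqnorm2 u.
Proof. by rewrite sqnorm2E; apply: sumr_ge0 => i _; apply: sqr_ge0. Qed.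
Lemma sqnorm2_eq0 n (u : 'cV[R]_n) : sqnorm2 u = 0 -> u = 0.
Proof.
rewrite sqnorm2E => h; apply/matrixP => i j; rewrite ord1 mxE.
have := psumr_eq0P (fun k _ => sqr_ge0 (u k 0)) h (i:=i) isT.
by move/eqP; rewrite sqrf_eq0 => /eqP.
Qed.
Lemma sqnorm2D n (a b : 'cV[R]_n) :
  sqnorm2 (a + b) = sqnorm2 a + 2 * dotv a b + sqnorm2 b.
Proof. rewrite /sqnorm2 !dotvDl !dotvDr (dotvC b a); ring. Qed.
Lemma sqnorm2Z n (c : R) (a : 'cV[R]_n) : sqnorm2 (c *: a) = c ^+ 2 * sqnorm2 a.
Proof. rewrite /sqnorm2 dotvZl dotvZr; ring. Qed.
Lemma sqnorm2N n (a : 'cV[R]_n) : sqnorm2 (- a) = sqnorm2 a.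
Proof. by rewrite /sqnorm2 dotvNl dotvNr opprK. Qed.

End H.

Theorem corollary1 (R : realType) (M N P : nat)
    (Phi : 'M[R]_(M, N)) (L : 'M[R]_(N, P)) (A : 'cV[R]_P -> R)
    (y : 'cV[R]_M) (lambda : R) (xs : 'cV[R]_N)
    (T : set 'cV[R]_P) (pT : 'M[R]_P) (e : 'cV[R]_P)
    (eta : 'cV[R]_M) (alpha : 'cV[R]_P) :
  is_norm A ->
  0 < lambda ->
  (forall x, objective Phi L A y lambda xs <= objective Phi L A y lambda x) ->
  decomposable_at A (L^T *m xs) T pT e ->
  subdiff A (L^T *m xs) alpha ->
  Phi^T *m eta = L *m alpha ->
  dual_norm A ((1%:M - pT) *m alpha) < 1 ->
  (forall x1 x2 : 'cV[R]_N,
      (1%:M - pT) *m (L^T *m x1) = 0 -> (1%:M - pT) *m (L^T *m x2) = 0 ->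
      Phi *m x1 = Phi *m x2 -> x1 = x2) ->
  forall x, (forall z, objective Phi L A y lambda x <= objective Phi L A y lambda z) ->
    x = xs.
Proof.
move=> [Atri AZ Adef] lam0 xsmin [Tsub [Tproj [pTT pTsym]] Te Hsub Hii] asub Heta Hd Hinj x xmin.
set pS := 1%:M - pT.
set u := L^T *m xs.
have A0 : A 0 = 0 by rewrite -(scale0r (0 : 'cV[R]_P)) AZ normr0 mul0r.
have AN : forall z, A (- z) = A z by move=> z; rewrite -scaleN1r AZ normrN normr1 mul1r.
have Age0 : forall z, 0 <= A z.
  move=> z; have := Atri z (- z); rewrite subrr A0 AN => h; lra.
have subE : forall b w, subdiff A u b -> dotv b u = A u /\ dotv b w <= A w.
  move=> b w hb.
  have h1 := hb 0; rewrite sub0r dotvNr A0 in h1.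
  have h2 := hb (u + u); rewrite addrK in h2.
  have h3 : A (u + u) = 2 * A u by rewrite -mulr2n -scaler_nat AZ normr_nat.
  have e1 : dotv b u = A u by lra.
  split => //; have := hb w; rewrite dotvBr e1; lra.
have pSS : pS *m pS = pS.
  by rewrite /pS mulmxBl mul1mx mulmxBr mulmx1 pTT subrr subr0.
have pTpS : pT *m pS = 0 by rewrite /pS mulmxBr mulmx1 pTT subrr.
have pSsym : pS^T = pS by rewrite /pS linearB /= trmx1 pTsym.
have pTe : pT *m e = e.
  by have [w ->] := (Tproj e).1 Te; rewrite mulmxA pTT.
have Sker : forall v, orth_compl T v -> pT *m v = 0.
  move=> v hv; apply: sqnorm2_eq0.
  have : dotv (pT *m v) v = 0 by apply: hv; apply/(Tproj _).2; exists v.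
  by move=> h; rewrite /sqnorm2 dotv_mul pTsym mulmxA pTT.
have pSv : forall v, orth_compl T v -> pS *m v = v.
  by move=> v hv; rewrite /pS mulmxBl mul1mx Sker // subr0.
have pS_S : forall z, orth_compl T (pS *m z).
  move=> z v /(Tproj _).1 [w ->].
  by rewrite dotvC dotv_mul pTsym mulmxA pTpS mul0mx dotv0l.
have memsub : forall v, orth_compl T v -> dual_norm A v <= 1 -> subdiff A u (e + v).
  move=> v hv hd; rewrite Hsub; split.
    by rewrite mulmxDr pTe Sker // addr0.
  by rewrite /pS mulmxBl mul1mx mulmxDr pTe Sker // addr0 addrC addKr.
have pTa : pT *m alpha = e by move: asub; rewrite Hsub => -[].
have S0 : orth_compl T 0 by move=> v _; rewrite dotv0r.
have dual0 : dual_norm A 0 <= 1.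
  apply: (@le_trans _ _ 0); last exact: ler01.
  apply: ge_sup.
    exists 0, 0 => /=; [by rewrite A0 ler01 | by rewrite dotv0l].
  by move=> _ [z _ <-]; rewrite dotv0l.
have esub : subdiff A u e by have := memsub 0 S0 dual0; rewrite addr0.
have vu0 : forall v, orth_compl T v -> dual_norm A v <= 1 -> dotv v u = 0.
  move=> v hv hd; have [h1 _] := subE _ 0 (memsub v hv hd).
  have [h2 _] := subE _ 0 esub; move: h1; rewrite dotvDl h2; lra.
have pSu : pS *m u = 0.
  apply: Adef; apply/eqP; rewrite eq_le Age0 andbT Hii //; apply: ge_sup.
    by exists 0, 0; [split | rewrite dotv0l].
  move=> _ [v [hv hd] <-].
  by rewrite dotv_mul pSsym pSv // vu0.
have PhiE : Phi *m x = Phi *m xs.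
  set a := y - Phi *m x; set b := y - Phi *m xs.
  set m := 2^-1 *: (x + xs).
  have em : y - Phi *m m = 2^-1 *: (a + b).
    rewrite /m -scalemxAr mulmxDr /a /b.
    move: (Phi *m x) (Phi *m xs) => X Y.
    apply/matrixP => i j; rewrite !mxE; lra.
  have eL : L^T *m m = 2^-1 *: (L^T *m x + L^T *m xs) by rewrite /m -scalemxAr mulmxDr.
  have hA : lambda * A (L^T *m m) <= lambda * (2^-1 * (A (L^T *m x) + A (L^T *m xs))).
    apply: ler_wpM2l; first exact: ltW.
    rewrite eL AZ ger0_norm ?invr_ge0 ?ler0n //.
    by apply: ler_wpM2l; [rewrite invr_ge0 ler0n | apply: Atri].
  have h1 := xmin m; have h2 := xsmin m.
  move: h1 h2; rewrite /objective em sqnorm2Z -/a -/b sqnorm2D expr2 => h1 h2.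
  have hab : sqnorm2 (a - b) = sqnorm2 a - 2 * dotv a b + sqnorm2 b.
    by rewrite sqnorm2D sqnorm2N dotvNr; ring.
  have h0 : sqnorm2 (a - b) <= 0 by lra.
  have : a - b = 0 by apply: sqnorm2_eq0; apply/eqP; rewrite eq_le h0 sqnorm2_ge0.
  move=> h; apply/eqP; rewrite -subr_eq0 -oppr_eq0 opprB; apply/eqP; rewrite -h /a /b.
  move: (Phi *m x) (Phi *m xs) => X Y.
  apply/matrixP=> i j; rewrite !mxE; lra.
set u' := L^T *m x.
have Au : A u' = A u.
  have h1 := xmin xs; have h2 := xsmin x.
  move: h1 h2; rewrite /objective PhiE -/u -/u' => h1 h2.
  have h : lambda * A u' = lambda * A u by lra.
  exact: (mulfI (lt0r_neq0 lam0) h).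
have aU : dotv alpha u' = dotv alpha u.
  by rewrite /u' /u !dotv_mul !trmxK -Heta -!dotv_mul PhiE.
have [Aua _] := subE alpha 0 asub.
set w := pS *m alpha.
set z := pS *m u'.
have wS : orth_compl T w by apply: pS_S.
have ew : dotv e w = 0 by apply: wS.
have hz1 : A z <= A u' - dotv e u'.
  rewrite Hii; last exact: pS_S.
  apply: ge_sup; first by exists 0, 0; [split | rewrite dotv0l].
  move=> _ [v [hv hd] <-].
  rewrite dotv_mul pSsym pSv //.
  have [_ h] := subE _ u' (memsub v hv hd).
  move: h; rewrite dotvDl; lra.
have hz2 : A u' = dotv e u' + dotv w z.
  have ea : alpha = pT *m alpha + w by rewrite /w /pS mulmxBl mul1mx addrC subrK.
  rewrite Au -Aua -aU {1}ea dotvDl pTa; congr (_ + _).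
  by rewrite /z dotv_mul pSsym /w mulmxA pSS.
have hz : A z <= dotv w z by lra.
have K : dotv w z <= dual_norm A w * A z.
  set D := [set dotv w z | z in [set z | A z <= 1]].
  have [hb|hnb] := pselect (has_ubound D).
    have [Az0|Azp] := eqVneq (A z) 0.
      by rewrite (Adef _ Az0) dotv0r A0 mulr0.
    have Azpos : 0 < A z by rewrite lt0r Azp Age0.
    set z1 := (A z)^-1 *: z.
    have hz1' : dotv w z1 <= dual_norm A w.
      apply: (ub_le_sup hb); exists z1 => //=.
      by rewrite /z1 AZ ger0_norm ?invr_ge0 ?Age0 // mulVf.
    have -> : dotv w z = A z * dotv w z1.
      by rewrite /z1 dotvZr mulrA divff // mul1r.
    by rewrite mulrC ler_wpM2r ?Age0.
  exfalso.
  have dt : forall t, 0 < t -> dual_norm A (t *: w) <= 1.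
    move=> t t0; rewrite /dual_norm sup_out ?ler01 //.
    move=> [_ [B hB]]; apply: hnb; exists (B / t) => _ [z2 hz3 <-].
    rewrite ler_pdivlMr //; rewrite mulrC -dotvZl; apply: hB; by exists z2.
  have tS : forall t, orth_compl T (t *: w).
    by move=> t; rewrite /w scalemxAr; apply: pS_S.
  have bnd : forall t, 0 < t -> t * sqnorm2 w <= A (u + w) - A u.
    move=> t t0.
    have [h1 h2] := subE _ (u + w) (memsub _ (tS t) (dt t t0)).
    move: h1 h2; rewrite !dotvDl !dotvDr ew !dotvZl /sqnorm2; lra.
  have [sw0|swp] := eqVneq (sqnorm2 w) 0.
    apply: hnb; exists 0 => _ [z2 _ <-].
    by rewrite (sqnorm2_eq0 sw0) dotv0l.
  have swpos : 0 < sqnorm2 w by rewrite lt0r swp sqnorm2_ge0.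
  set C := A (u + w) - A u.
  have tpos : 0 < (`|C| + 1) / sqnorm2 w by rewrite divr_gt0 // ltr_pwDr // ler01.
  have := bnd _ tpos; rewrite -mulrA mulVf // mulr1.
  have := ler_norm C; move=> h1; rewrite -/C; lra.
have Az0 : A z = 0.
  apply/eqP; rewrite eq_le Age0 andbT.
  have : A z * (1 - dual_norm A w) <= 0 by rewrite mulrBr mulr1 mulrC; lra.
  by rewrite pmulr_lle0 // subr_gt0.
apply: Hinj (Adef _ Az0) pSu PhiE.
Qed.
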